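(* For a quantum sequence ensemble $\mathcal{E}=\bigotimes_{l=1}^{L}\mathcal{E}^{l}$, $\vec{x}=(x_{1},\ldots,x_{L})$ with $x_l\in\{1,\ldots,n_l\}$, and $E\in\mathbb{M}_{\vec{x}}(\mathcal{E})$, we have \[ \Big[\bigotimes_{l=1}^{L}\Pi_{x_{l}}^{\bot}(\mathcal{E}^{l})\Big]\Pi(\mathcal{E})E\Pi(\mathcal{E})\Big[\bigotimes_{l=1}^{L}\Pi_{x_{l}}^{\bot}(\mathcal{E}^{l})\Big]=\Pi(\mathcal{E})E\Pi(\mathcal{E}), \] where $\Pi(\mathcal{E})$ is the projection onto the support of $\rho_{0}$ and $\Pi_{x_{l}}^{\bot}(\mathcal{E}^{l})$ is the projection onto the kernel of $\mathcal{C}_{x_{l}}(\mathcal{E}^{l})\rho_{0}^{l}-\eta_{x_{l}}^{l}\rho_{x_{l}}^{l}$.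
   Context: Let $\mathcal{E}^{l}=\{\eta_{i}^{l},\rho_{i}^{l}\}_{i\in\{1,\ldots,n_{l}\}}$, $l=1,\ldots,L$, be quantum state ensembles (density operators on finite-dimensional Hilbert spaces, nonzero probabilities $\eta_i^l$), with average states $\rho_0^l=\sum_i\eta_i^l\rho_i^l$. The sequence ensemble $\mathcal{E}=\bigotimes_l\mathcal{E}^l=\{\eta_{\vec{c}},\rho_{\vec{c}}\}_{\vec{c}}$ has $\eta_{\vec{c}}=\prod_l\eta_{c_l}^l$, $\rho_{\vec{c}}=\bigotimes_l\rho_{c_l}^l$, and average state $\rho_0=\bigotimes_l\rho_0^l$. For an ensemble $\{\eta_i,\rho_i\}_i$ with average state $\rho_0$, the maximum confidence to identify $\rho_x$ is $\mathcal{C}_x=\max\eta_x\mathrm{Tr}(\rho_xM_x)/\mathrm{Tr}(\rho_0M_x)$ over measurements $\{M_?\}\cup\{M_i\}_i$ with $\mathrm{Tr}(\rho_0M_x)>0$; equivalently $\mathcal{C}_x=\min\{q\in\mathbb{R}\mid q\rho_0-\eta_x\rho_x\succeq0\}$. For the sequence ensemble, $\mathbb{M}_{\vec{x}}(\mathcal{E})=\{E\succeq0\mid \mathrm{Tr}[(\mathcal{C}_{\vec{x}}(\mathcal{E})\rho_0-\eta_{\vec{x}}\rho_{\vec{x}})E]=0\}$, the set of positive-semidefinite operators that can serve as the $\vec{x}$-th element of a maximum-confidence measurement. *)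

(* Defs.v *)
(* Quantum operators are square matrices over an arbitrary
   numClosedFieldType C (e.g. the complex numbers). *)
From HB Require Import structures.
From mathcomp Require Import all_boot all_order all_algebra.
Set Implicit Arguments.
Unset Strict Implicit.
Unset Printing Implicit Defensive.
Import Order.TTheory GRing.Theory Num.Theory.
Local Open Scope ring_scope.

Section QDefs.
Variable C : numClosedFieldType.

Definition adjmx m n (A : 'M[C]_(m, n)) : 'M[C]_(n, m) := (map_mx Num.conj A)^T.

Definition psd n (A : 'M[C]_n) : Prop :=
  adjmx A = A /\ forall v : 'cV[C]_n, 0 <= (adjmx v *m A *m v) 0 0.

Definition density n (A : 'M[C]_n) : Prop := psd A /\ \tr A = 1.

Definition proj_onto n (P : 'M[C]_n) (S : 'cV[C]_n -> Prop) : Prop :=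
  [/\ adjmx P = P, P *m P = P & forall v, P *m v = v <-> S v].

Definition supp n (A : 'M[C]_n) : 'cV[C]_n -> Prop :=
  fun v => exists w, v = A *m w.
Definition kern n (A : 'M[C]_n) : 'cV[C]_n -> Prop :=
  fun v => A *m v = 0.

Definition is_maxconf n (rho0 rhox : 'M[C]_n) (etax q : C) : Prop :=
  [/\ q \is Num.real, psd (q *: rho0 - etax *: rhox) &
      forall q', q' \is Num.real -> psd (q' *: rho0 - etax *: rhox) -> q <= q'].

Definition avg_state d k (eta : 'I_k -> C) (rho : 'I_k -> 'M[C]_d) : 'M[C]_d :=
  \sum_(i < k) eta i *: rho i.

(* M_x : operators that can be the x-th element of a max-confidence measurement *)
Definition Mset n (Cx : C) (rho0 rhox : 'M[C]_n) (etax : C) (E : 'M[C]_n) : Prop :=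
  psd E /\ \tr ((Cx *: rho0 - etax *: rhox) *m E) = 0.

(* Tensor products over L factors of dimensions d l: the product space has the
   basis indexed by sequences (i_l)_l, encoded in 'I_(#|seqidx d|) via enum_val. *)
Definition seqidx L (d : 'I_L -> nat) := {dffun forall l : 'I_L, 'I_(d l)}.
Definition tdim L (d : 'I_L -> nat) : nat := #|{: seqidx d}|.

Definition tens L (d : 'I_L -> nat) (A : forall l : 'I_L, 'M[C]_(d l))
  : 'M[C]_(tdim d) :=
  \matrix_(i, j) \prod_(l : 'I_L)
     A l ((enum_val i : seqidx d) l) ((enum_val j : seqidx d) l).

End QDefs.

(* Main.v *)
Require Import Defs.
From mathcomp Require Import all_boot all_order all_algebra.
From mathcomp Require Import sesquilinear spectral.
From Stdlib Require Import Classical.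
Set Implicit Arguments. Unset Strict Implicit. Unset Printing Implicit Defensive.
Import Order.TTheory GRing.Theory Num.Theory.
Local Open Scope ring_scope.


Lemma prod_sum_dep (R : comNzRingType) (I : finType) (T_ : I -> finType)
  (F : forall i, T_ i -> R) :
  \prod_(i : I) \sum_(j : T_ i) F i j =
  \sum_(f : {dffun forall i, T_ i}) \prod_(i : I) F i (f i).
Proof.
rewrite (eq_bigr (fun i => \sum_(j in tagged_with T_ i) untag 0 (F i) j)); last first.
  by move=> i _; rewrite (big_tag F).
rewrite bigA_distr_big_dep.
have := @big_fprod R 0 1 *%R +%R I T_ (fun i => [ffun j => F i j]).
move=> /esym H.
transitivity (\sum_(t : fprod T_) \prod_(i in I) [ffun j => F i j] (t i)).
  rewrite -H; apply: eq_big => [g|g _]; first by apply/familyP/familyP.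
  apply: eq_bigr => i _.
  by case: (g i) => k t /=; rewrite /untag; case: eqP => //= e; rewrite ffunE.
rewrite (reindex (@fprod_of_dffun I T_)); last exact/onW_bij/fprod_of_dffun_bij.
apply: eq_bigr => f _; apply: eq_bigr => i _.
by rewrite ffunE /fprod_of_dffun fprodE.
Qed.

Section Basic.
Variable C : numClosedFieldType.

Lemma adjmxE m n (A : 'M[C]_(m, n)) i j : adjmx A i j = (A j i)^*.
Proof. by rewrite /adjmx !mxE. Qed.

Lemma adjmxM m n p (A : 'M[C]_(m, n)) (B : 'M[C]_(n, p)) :
  adjmx (A *m B) = adjmx B *m adjmx A.
Proof. by rewrite /adjmx map_mxM trmx_mul. Qed.

Lemma adjmxK m n (A : 'M[C]_(m, n)) : adjmx (adjmx A) = A.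
Proof. by apply/matrixP => i j; rewrite !adjmxE conjCK. Qed.

Lemma adjmxD m n (A B : 'M[C]_(m, n)) : adjmx (A + B) = adjmx A + adjmx B.
Proof. by apply/matrixP => i j; rewrite !adjmxE !mxE ?adjmxE rmorphD. Qed.

Lemma adjmxZ m n a (A : 'M[C]_(m, n)) : adjmx (a *: A) = a^* *: adjmx A.
Proof. by apply/matrixP => i j; rewrite !adjmxE !mxE ?adjmxE rmorphM. Qed.

Lemma adjmxN m n (A : 'M[C]_(m, n)) : adjmx (- A) = - adjmx A.
Proof. by apply/matrixP => i j; rewrite !adjmxE !mxE ?adjmxE rmorphN. Qed.

Lemma adjmxB m n (A B : 'M[C]_(m, n)) : adjmx (A - B) = adjmx A - adjmx B.
Proof. by rewrite adjmxD adjmxN. Qed.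

Lemma adjmx1 n : adjmx (1%:M : 'M[C]_n) = 1%:M.
Proof. by apply/matrixP => i j; rewrite adjmxE !mxE eq_sym; case: (_ == _); rewrite ?rmorph1 ?rmorph0. Qed.

Lemma adjmx0 m n : adjmx (0 : 'M[C]_(m, n)) = 0.
Proof. by apply/matrixP => i j; rewrite adjmxE !mxE rmorph0. Qed.

Definition quad n (A : 'M[C]_n) (v : 'cV[C]_n) := (adjmx v *m A *m v) 0 0.

Lemma normE n (w : 'cV[C]_n) : (adjmx w *m w) 0 0 = \sum_i (w i 0)^* * w i 0.
Proof. by rewrite mxE; apply: eq_bigr => i _; rewrite adjmxE. Qed.

Lemma norm_ge0 n (w : 'cV[C]_n) : 0 <= (adjmx w *m w) 0 0.
Proof. by rewrite normE sumr_ge0 // => i _; rewrite mulrC mul_conjC_ge0. Qed.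

Lemma norm_eq0 n (w : 'cV[C]_n) : (adjmx w *m w) 0 0 = 0 -> w = 0.
Proof.
rewrite normE => /eqP; rewrite psumr_eq0 => [/allP H|i _]; last by rewrite mulrC mul_conjC_ge0.
apply/matrixP => i j; rewrite ord1 mxE; have := H i (mem_index_enum _).
by rewrite mulrC mul_conjC_eq0 => /eqP.
Qed.

Lemma psd_gram n (B : 'M[C]_n) : psd (adjmx B *m B).
Proof.
split; first by rewrite adjmxM adjmxK.
by move=> v; rewrite mulmxA -mulmxA -adjmxM norm_ge0.
Qed.

Definition fac n (A : 'M[C]_n) : 'M[C]_n :=
  diag_mx (map_mx sqrtC (spectral_diag A)) *m spectralmx A.

Lemma quad_delta m n (X : 'M[C]_(m, n)) (i : 'I_m) (j : 'I_n) :
  (delta_mx (0 : 'I_1) i *m X *m delta_mx j (0 : 'I_1)) 0 0 = X i j.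
Proof. by rewrite -rowE -colE !mxE. Qed.

Lemma adjmx_delta m n (i : 'I_m) (j : 'I_n) : adjmx (delta_mx i j) = delta_mx j i :> 'M[C]_(n, m).
Proof.
apply/matrixP => a b; rewrite adjmxE !mxE.
by case: (a == j); case: (b == i); rewrite /= ?rmorph1 ?rmorph0.
Qed.

Lemma adjmx_diag n (v : 'rV[C]_n) : adjmx (diag_mx v) = diag_mx (map_mx Num.conj v).
Proof.
apply/matrixP => a b; rewrite adjmxE !mxE eq_sym.
by case: eqP => [->|_]; rewrite ?mulr1n ?mulr0n ?rmorph0.
Qed.

Lemma adj_tr m n (A : 'M[C]_(m,n)) : map_mx Num.conj (A^T) = adjmx A.
Proof. by rewrite /adjmx map_trmx. Qed.

Lemma psd_fac n (A : 'M[C]_n) : psd A -> A = adjmx (fac A) *m fac A.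
Proof.
move=> [hA pA].
have herm : A \is hermsymmx.
  by apply/is_hermitianmxP; rewrite expr0 scale1r adj_tr hA.
have /orthomx_spectralP eA := hermitian_normalmx herm.
have U := spectral_unitarymx A.
move: eA; rewrite invmx_unitary // adj_tr.
set P := spectralmx A; set sp := spectral_diag A => eA.
have PP : P *m adjmx P = 1%:M by move/unitarymxP: U; rewrite adj_tr.
have spE i : sp 0 i = quad A (adjmx P *m delta_mx i 0).
  rewrite /quad adjmxM adjmxK adjmx_delta eA !mulmxA.
  rewrite -!(mulmxA _ P (adjmx P)) !PP !mulmx1 quad_delta mxE eqxx mulr1n //.
have sp_ge0 i : 0 <= sp 0 i by rewrite spE; apply: pA.
rewrite /fac adjmxM adjmx_diag -/P -/sp.
rewrite -[_ *m (diag_mx _ *m P)]mulmxA [diag_mx _ *m (_ *m _)]mulmxA mulmx_diag.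
rewrite {1}eA mulmxA; congr (_ *m _ *m _); apply/matrixP => a b; rewrite !mxE.
case: eqP => [->|_]; rewrite ?mulr0n ?mulr1n //.
by rewrite conj_Creal ?ger0_real ?sqrtC_ge0 // -expr2 sqrtCK.
Qed.

Lemma quadD n (A B : 'M[C]_n) v : quad (A + B) v = quad A v + quad B v.
Proof. by rewrite /quad mulmxDr mulmxDl mxE. Qed.
Lemma quadZ n a (A : 'M[C]_n) v : quad (a *: A) v = a * quad A v.
Proof. by rewrite /quad -scalemxAr -scalemxAl mxE. Qed.
Lemma quadN n (A : 'M[C]_n) v : quad (- A) v = - quad A v.
Proof. by rewrite -scaleN1r quadZ mulN1r. Qed.
Lemma quadB n (A B : 'M[C]_n) v : quad (A - B) v = quad A v - quad B v.
Proof. by rewrite quadD quadN. Qed.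
Lemma quad0 n (v : 'cV[C]_n) : quad 0 v = 0.
Proof. by rewrite /quad mulmx0 mul0mx mxE. Qed.
Lemma quad_e n (A : 'M[C]_n) i : quad A (delta_mx i 0) = A i i.
Proof. by rewrite /quad adjmx_delta quad_delta. Qed.
Lemma quad_ker n (A : 'M[C]_n) v : A *m v = 0 -> quad A v = 0.
Proof. by rewrite /quad -mulmxA => ->; rewrite mulmx0 mxE. Qed.

Lemma quad_real n (A : 'M[C]_n) v : adjmx A = A -> quad A v \is Num.real.
Proof.
move=> hA; rewrite CrealE; apply/eqP.
have -> : (quad A v)^* = adjmx (adjmx v *m A *m v) 0 0 by rewrite adjmxE.
by rewrite !adjmxM adjmxK hA mulmxA.
Qed.

Lemma psd_quad_ge0 n (A : 'M[C]_n) v : psd A -> 0 <= quad A v.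
Proof. by case=> _; apply. Qed.

Lemma psd_quad0 n (A : 'M[C]_n) v : psd A -> quad A v = 0 -> A *m v = 0.
Proof.
move=> /psd_fac ->; rewrite /quad mulmxA -mulmxA -adjmxM => /norm_eq0 H.
by rewrite -mulmxA H mulmx0.
Qed.

Lemma psd_tr0 n (M E : 'M[C]_n) : psd M -> psd E -> \tr (M *m E) = 0 -> M *m E = 0.
Proof.
move=> pM /psd_fac ->; move: (fac E) => B.
have qE i : (B *m (M *m adjmx B)) i i = quad M (adjmx B *m delta_mx i 0).
  by rewrite /quad adjmxM adjmxK adjmx_delta -quad_delta !mulmxA.
rewrite mulmxA mxtrace_mulC /mxtrace => /eqP; rewrite psumr_eq0 => [/allP H|i _]; last first.
  by rewrite qE; apply: psd_quad_ge0.
have HM : M *m adjmx B = 0.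
  apply/matrixP => a b; rewrite mxE.
  have := H b (mem_index_enum _).
  rewrite qE => /eqP /(psd_quad0 pM) /matrixP /(_ a 0).
  by rewrite mulmxA -colE !mxE.
by rewrite HM mul0mx.
Qed.

Lemma psd_add n (A B : 'M[C]_n) : psd A -> psd B -> psd (A + B).
Proof.
move=> [hA pA] [hB pB]; split; first by rewrite adjmxD hA hB.
by move=> v; rewrite -/(quad _ v) quadD addr_ge0 //; [apply: pA|apply: pB].
Qed.

Lemma psd_scale n c (A : 'M[C]_n) : 0 <= c -> psd A -> psd (c *: A).
Proof.
move=> c0 [hA pA]; split; first by rewrite adjmxZ hA conj_Creal ?ger0_real.
by move=> v; rewrite -/(quad _ v) quadZ mulr_ge0 //; apply: pA.
Qed.

Lemma psd0 n : psd (0 : 'M[C]_n).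
Proof. by split; [rewrite adjmx0 | move=> v; rewrite -/(quad _ v) quad0]. Qed.

Lemma psd_sum n (I : finType) (F : I -> 'M[C]_n) : (forall i, psd (F i)) -> psd (\sum_i F i).
Proof.
move=> H; apply: (big_ind (@psd C n)) => //; [exact: psd0 | exact: psd_add].
Qed.

Lemma psd_tr_ge0 n (A : 'M[C]_n) : psd A -> 0 <= \tr A.
Proof.
by move=> [_ pA]; rewrite /mxtrace sumr_ge0 // => i _; rewrite -quad_e; apply: pA.
Qed.


End Basic.


Section Tens.
Variable C : numClosedFieldType.
Variable L : nat.
Variable d : 'I_L -> nat.
Local Notation T := (seqidx d).
Local Notation ev i := (enum_val i : T).

Lemma sum_tdim (F : T -> C) : \sum_(k < tdim d) F (ev k) = \sum_(f : T) F f.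
Proof. by rewrite -(big_enum_val F). Qed.

Lemma tensM (A B : forall l, 'M[C]_(d l)) :
  tens A *m tens B = tens (fun l => A l *m B l).
Proof.
apply/matrixP => i j; rewrite !mxE.
under [RHS]eq_bigr do rewrite mxE.
rewrite prod_sum_dep -(sum_tdim (fun f => \prod_l (A l (ev i l) (f l) * B l (f l) (ev j l)))).
by apply: eq_bigr => k _; rewrite !mxE big_split.
Qed.

Lemma eq_tens (A B : forall l, 'M[C]_(d l)) : (forall l, A l = B l) -> tens A = tens B.
Proof. by move=> H; apply/matrixP => i j; rewrite !mxE; apply: eq_bigr => l _; rewrite H. Qed.

Lemma tensZ (c : 'I_L -> C) (A : forall l, 'M[C]_(d l)) :
  tens (fun l => c l *: A l) = (\prod_l c l) *: tens A.
Proof. by apply/matrixP => i j; rewrite !mxE -big_split; apply: eq_bigr => l _; rewrite mxE. Qed.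

Lemma tens1 : tens (fun l => 1%:M : 'M[C]_(d l)) = 1%:M.
Proof.
apply/matrixP => i j; rewrite !mxE.
have [<-|nij] := eqVneq i j.
  by rewrite mulr1n big1 // => l _; rewrite mxE eqxx.
rewrite mulr0n.
have [l nl] : exists l, ev i l != ev j l.
  apply/existsP; apply: contraR nij => /existsPn H; apply/eqP/enum_val_inj/ffunP => l.
  by have := H l; rewrite negbK => /eqP.
by rewrite (bigD1 l) //= mxE (negbTE nl) mul0r.
Qed.

Lemma adjmx_tens (A : forall l, 'M[C]_(d l)) : adjmx (tens A) = tens (fun l => adjmx (A l)).
Proof.
apply/matrixP => i j; rewrite adjmxE !mxE rmorph_prod; apply: eq_bigr => l _.
by rewrite adjmxE.
Qed.

Lemma tens_lin (k : 'I_L) a (X Y A : forall l, 'M[C]_(d l)) :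
  tens (fun l => if l == k then a *: X l + Y l else A l) =
  a *: tens (fun l => if l == k then X l else A l) + tens (fun l => if l == k then Y l else A l).
Proof.
apply/matrixP => i j; rewrite !mxE.
have E (F : forall l, 'M[C]_(d l)) : \prod_l (if l == k then F l else A l) (ev i l) (ev j l)
   = F k (ev i k) (ev j k) * \prod_(l | l != k) A l (ev i l) (ev j l).
  by rewrite (bigD1 k) //= eqxx; congr (_ * _); apply: eq_bigr => l /negbTE ->.
by rewrite !E !mxE mulrDl mulrA.
Qed.
Lemma tens_sub (k : 'I_L) (X Y A : forall l, 'M[C]_(d l)) :
  tens (fun l => if l == k then X l - Y l else A l) =
  tens (fun l => if l == k then X l else A l) - tens (fun l => if l == k then Y l else A l).
Proof.
rewrite (eq_tens (B := fun l => if l == k then (-1) *: Y l + X l else A l)).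
  by rewrite tens_lin scaleN1r addrC.
by move=> l; case: (l == k); rewrite // scaleN1r addrC.
Qed.

Lemma psd_tens (A : forall l, 'M[C]_(d l)) : (forall l, psd (A l)) -> psd (tens A).
Proof.
move=> H; rewrite (eq_tens (B := fun l => adjmx (fac (A l)) *m fac (A l))); last first.
  by move=> l; apply: psd_fac.
by rewrite -tensM -adjmx_tens; apply: psd_gram.
Qed.

Lemma psd_tens_diff (f g : forall l, 'M[C]_(d l)) :
  (forall l, psd (g l)) -> (forall l, psd (f l - g l)) -> psd (tens f - tens g).
Proof.
move=> pg pfg.
have pf l : psd (f l).
  have -> : f l = (f l - g l) + g l by rewrite addrNK.
  exact: psd_add.
suff H : forall s : seq 'I_L, psd (tens (fun l => if l \in s then f l else g l) - tens g).
  by rewrite (eq_tens (B := fun l => if l \in enum 'I_L then f l else g l)) ?H // => l; rewrite mem_enum.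
elim => [|m s IH].
  by rewrite (eq_tens (B := g)) ?subrr; [exact: psd0 | by []].
have [ms|nms] := boolP (m \in s).
  rewrite (eq_tens (B := fun l => if l \in s then f l else g l)) // => l.
  by rewrite in_cons; case: eqP => // ->; rewrite ms.
set h := fun l => if l \in s then f l else g l.
have -> : tens (fun l => if l \in m :: s then f l else g l) - tens g =
   tens (fun l => if l == m then f l - g l else h l) + (tens h - tens g).
  have eh : tens (fun l => if l == m then g l else h l) = tens h.
    by apply: eq_tens => l; case: eqP => // ->; rewrite /h (negbTE nms).
  rewrite tens_sub eh addrA addrNK; congr (_ - _).
  by apply: eq_tens => l; rewrite in_cons /h; case: eqP.
apply: psd_add => //; apply: psd_tens => l; case: eqP => _ //.
by rewrite /h; case: (_ \in _).
Qed.

End Tens.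

Section Extra.
Variable C : numClosedFieldType.

Lemma colwise m n (X Y : 'M[C]_(m, n)) :
  (forall j, X *m delta_mx j (0 : 'I_1) = Y *m delta_mx j 0) -> X = Y.
Proof.
by move=> H; apply/matrixP => a b; have /matrixP /(_ a 0) := H b; rewrite -!colE !mxE.
Qed.

Lemma quad_sum n (I : finType) (F : I -> 'M[C]_n) v :
  quad (\sum_i F i) v = \sum_i quad (F i) v.
Proof.
elim/big_rec2: _ => [|i A y _ IH]; first by rewrite quad0.
by rewrite quadD IH.
Qed.

Lemma quad_const n (v : 'cV[C]_n) (X : 'M[C]_n) (a b : 'I_n) :
  (adjmx (v *m (const_mx 1 : 'rV[C]_n)) *m X *m (v *m const_mx 1)) a b = quad X v.
Proof.
rewrite adjmxM !mulmxA -(mulmxA _ (adjmx v)) -(mulmxA _ (adjmx v *m X)).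
rewrite /quad; move: (adjmx v *m X *m v) => M.
rewrite !mxE big_ord1 !mxE big_ord1 !mxE.
by rewrite rmorph1 mul1r mulr1.
Qed.

Lemma herm_quad_sq n (V : 'M[C]_n) (y : 'cV[C]_n) : adjmx V = V -> V *m V *m y = 0 -> V *m y = 0.
Proof.
move=> hV H; apply: norm_eq0.
by rewrite adjmxM hV -mulmxA [V *m (V *m y)]mulmxA H mulmx0 mxE.
Qed.

Lemma entry_lin m n c e (A B : 'M[C]_(m, n)) i j :
  (c *: A - e *: B) i j = c * A i j - e * B i j.
Proof. by rewrite !mxE. Qed.

End Extra.


Theorem lemma5 (C : numClosedFieldType) (L : nat)
  (d n : 'I_L -> nat)
  (eta : forall l : 'I_L, 'I_(n l) -> C)
  (rho : forall l : 'I_L, 'I_(n l) -> 'M[C]_(d l))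
  (Heta_pos : forall l i, 0 < eta l i)
  (Heta_sum : forall l, \sum_(i < n l) eta l i = 1)
  (Hrho : forall l i, density (rho l i))
  (x : {dffun forall l : 'I_L, 'I_(n l)})
  (Cl : 'I_L -> C)
  (HCl : forall l, is_maxconf (avg_state (eta l) (rho l)) (rho l (x l))
                              (eta l (x l)) (Cl l))
  (Cs : C)
  (HCs : is_maxconf (tens (fun l => avg_state (eta l) (rho l)))
                    (tens (fun l => rho l (x l)))
                    (\prod_(l : 'I_L) eta l (x l)) Cs)
  (Pi : 'M[C]_(tdim d))
  (HPi : proj_onto Pi (supp (tens (fun l => avg_state (eta l) (rho l)))))
  (Pperp : forall l : 'I_L, 'M[C]_(d l))
  (HPperp : forall l, proj_onto (Pperp l)
              (kern (Cl l *: avg_state (eta l) (rho l) - eta l (x l) *: rho l (x l))))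
  (E : 'M[C]_(tdim d))
  (HE : Mset Cs (tens (fun l => avg_state (eta l) (rho l)))
                (tens (fun l => rho l (x l)))
                (\prod_(l : 'I_L) eta l (x l)) E) :
  tens Pperp *m Pi *m E *m Pi *m tens Pperp = Pi *m E *m Pi.
Proof.
set rho0 := fun l => avg_state (eta l) (rho l).
set a := fun l => Cl l *: rho0 l.
set b := fun l => eta l (x l) *: rho l (x l).
set Al := fun l => a l - b l.
set R0 := tens rho0.
set RX := tens (fun l => rho l (x l)).
set etax := \prod_(l : 'I_L) eta l (x l).
set P := \prod_(l : 'I_L) Cl l.
have eta_real l i : eta l i \is Num.real by apply: gtr0_real.
have prho l i : psd (rho l i) by case: (Hrho l i).
have trrho l i : \tr (rho l i) = 1 by case: (Hrho l i).
have prho0 l : psd (rho0 l).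
  by apply: psd_sum => i; apply: psd_scale; [apply: ltW | apply: prho].
have trrho0 l : \tr (rho0 l) = 1.
  rewrite /rho0 /avg_state -(Heta_sum l).
  elim/big_rec2: _ => [|i y A _ IH]; first by rewrite mxtrace0.
  by rewrite mxtraceD IH mxtraceZ trrho mulr1.
have Cl_real l : Cl l \is Num.real by case: (HCl l).
have pAl l : psd (Al l) by case: (HCl l).
have Clmin l : forall q, q \is Num.real -> psd (q *: rho0 l - b l) -> Cl l <= q.
  by case: (HCl l).
have Cl_pos l : 0 < Cl l.
  have := psd_tr_ge0 (pAl l); rewrite /Al /a /b mxtraceD -scaleN1r !mxtraceZ trrho0 trrho !mulr1.
  rewrite mulN1r subr_ge0 => H; exact: lt_le_trans (Heta_pos l (x l)) H.
have pa l : psd (a l) by apply: psd_scale; [apply: ltW | ].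
have pb l : psd (b l) by apply: psd_scale; [apply: ltW | ].
have dpos l : (0 < d l)%N.
  rewrite lt0n; apply/negP => /eqP e; have := trrho l (x l).
  rewrite /mxtrace big1 => [/esym/eqP|i _]; first by rewrite oner_eq0.
  by move: (ltn_ord i); rewrite {2}e.
have Ha : tens a = P *: R0 by rewrite /a tensZ.
have Hb : tens b = etax *: RX by rewrite /b tensZ.
have [Cs_real pM Csmin] := HCs.
have P_real : P \is Num.real by apply: rpred_prod.
have P_pos : 0 < P by apply: prodr_gt0.
have etax_pos : 0 < etax by apply: prodr_gt0.
have CsP : Cs <= P.
  apply: Csmin => //; rewrite -Ha -Hb; apply: psd_tens_diff => //.
have PCs : P <= Cs.
  rewrite real_leNgt //; apply/negP => CsltP.
  set t0 := if 0 <= Cs then Cs / P else 0.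
  have t0ge0 : 0 <= t0.
    by rewrite /t0; case: ifP => // c0; apply: divr_ge0 => //; apply: ltW.
  have t0lt1 : t0 < 1 by rewrite /t0; case: ifP => _ //; rewrite ltr_pdivrMr // mul1r.
  have Cst0 : Cs <= t0 * P.
    rewrite /t0; case: ifP => c0; first by rewrite divfK ?gt_eqF.
    rewrite mul0r; apply: ltW; rewrite real_ltNge ?c0 //; exact: real0.
  have [s [s0 s1 st]] : exists s, [/\ 0 <= s, s < 1 & t0 < s ^+ L].
    have [L0|Lpos] := posnP L.
      by exists 0; rewrite L0 expr0 lexx ltr01 t0lt1.
    have [ut0 u1] := midf_lt t0lt1.
    set u := (t0 + 1) / 2 in ut0 u1.
    have u0 : 0 <= u by apply: le_trans t0ge0 (ltW ut0).
    exists (L.-root u); split.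
    - by rewrite rootC_ge0.
    - rewrite real_ltNge ?ger0_real ?rootC_ge0 //; apply/negP => H.
      by have := exprn_ege1 L H; rewrite rootCK // => /(lt_le_trans u1); rewrite ltxx.
    - by rewrite rootCK.
  set q := fun l => s * Cl l.
  have q_real l : q l \is Num.real by apply: rpredM; [apply: ger0_real | apply: Cl_real].
  have qlt l : q l < Cl l by rewrite /q gtr_pMl.
  have q0 l : 0 <= q l by rewrite mulr_ge0 // ltW.
  have nps l : ~ psd (q l *: rho0 l - b l).
    move=> H; have := lt_le_trans (qlt l) (Clmin l (q l) (q_real l) H); by rewrite ltxx.
  have exv l : exists v, quad (q l *: rho0 l - b l) v < 0.
    have hq : adjmx (q l *: rho0 l - b l) = q l *: rho0 l - b l.
      by rewrite adjmxB adjmxZ conj_Creal // (proj1 (prho0 l)) (proj1 (pb l)).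
    apply: NNPP => nH; apply: (nps l); split => // v.
    have := quad_real v hq; move=> qr.
    rewrite real_leNgt ?real0 //; apply/negP => H; apply: nH; by exists v.
  set v := fun l => xchoose (exv l).
  have vP l : quad (q l *: rho0 l - b l) (v l) < 0 := xchooseP (exv l).
  set r := fun l => quad (rho0 l) (v l).
  set sr := fun l => quad (rho l (x l)) (v l).
  have r0 l : 0 <= r l := psd_quad_ge0 _ (prho0 l).
  have sr0 l : 0 <= sr l := psd_quad_ge0 _ (prho l (x l)).
  have ineq l : q l * r l < eta l (x l) * sr l.
    by have := vP l; rewrite quadB !quadZ subr_lt0.
  have rge l : eta l (x l) * sr l <= r l.
    rewrite /r /rho0 /avg_state quad_sum (bigD1 (x l)) //= quadZ lerDl.
    by apply: sumr_ge0 => i _; rewrite quadZ mulr_ge0 ?psd_quad_ge0 // ltW.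
  have rpos l : 0 < r l.
    exact: lt_le_trans (le_lt_trans (mulr_ge0 (q0 l) (r0 l)) (ineq l)) (rge l).
  set V := fun l => v l *m (const_mx 1 : 'rV[C]_(d l)).
  set W := tens V.
  set j0 : 'I_(tdim d) := enum_rank ([ffun l => Ordinal (dpos l)] : seqidx d).
  have key (X : forall l, 'M[C]_(d l)) :
      (adjmx W *m tens X *m W) j0 j0 = \prod_l quad (X l) (v l).
    rewrite adjmx_tens !tensM mxE; apply: eq_bigr => l _; exact: quad_const.
  have := psd_quad_ge0 (W *m delta_mx j0 0) pM.
  have -> : quad (Cs *: R0 - etax *: RX) (W *m delta_mx j0 0) =
            (adjmx W *m (Cs *: R0 - etax *: RX) *m W) j0 j0.
    by rewrite /quad adjmxM adjmx_delta -[RHS]quad_delta !mulmxA.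
  rewrite mulmxBr mulmxBl -!scalemxAr -!scalemxAl entry_lin.
  rewrite key key subr_ge0.
  have -> : etax * \prod_l quad (rho l (x l)) (v l) = \prod_l (eta l (x l) * sr l).
    by rewrite big_split.
  have H1 : \prod_l (q l * r l) <= \prod_l (eta l (x l) * sr l).
    by apply: ler_prod => l _; rewrite mulr_ge0 // ltW.
  have H2 : \prod_l (q l * r l) = s ^+ L * P * \prod_l r l.
    by rewrite big_split /q big_split prodr_const card_ord.
  have H3 : Cs * \prod_l r l < s ^+ L * P * \prod_l r l.
    rewrite ltr_pM2r; last by apply: prodr_gt0.
    by apply: le_lt_trans Cst0 _; rewrite ltr_pM2r.
  rewrite H2 in H1; move=> H4; have := lt_le_trans H3 (le_trans H1 H4).
  by rewrite ltxx.
have CsE : Cs = P by apply/le_anti; rewrite CsP PCs.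
have [hPi PiPi PiS] := HPi.
have hR0 : adjmx R0 = R0.
  by rewrite adjmx_tens; apply: eq_tens => l; case: (prho0 l).
have pRX : psd RX by apply: psd_tens.
have [pE trE] := HE.
set M := Cs *: R0 - etax *: RX.
have HM : M = tens a - tens b by rewrite Ha Hb /M CsE.
have ME : M *m E = 0 by apply: psd_tr0.
have PiR0 : Pi *m R0 = R0.
  apply: colwise => j; rewrite -mulmxA; apply/PiS; by exists (delta_mx j 0).
have R0Pi : R0 *m (1%:M - Pi) = 0.
  have H : (1%:M - Pi) *m R0 = 0 by rewrite mulmxBl mul1mx PiR0 subrr.
  by have := congr1 (@adjmx _ _ _) H; rewrite adjmxM adjmxB adjmx1 hPi hR0 adjmx0.
have MPi : M *m Pi = M.
  have H : M *m (1%:M - Pi) = 0.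
    apply: colwise => j; rewrite mul0mx -mulmxA; set z := (1%:M - Pi) *m delta_mx j 0.
    have R0z : R0 *m z = 0 by rewrite /z mulmxA R0Pi mul0mx.
    have qz : quad RX z = 0.
      have := psd_quad_ge0 z pM; rewrite quadB !quadZ (quad_ker R0z) mulr0 sub0r.
      rewrite oppr_ge0 => H1; apply/eqP; rewrite eq_le psd_quad_ge0 // andbT.
      by rewrite -(pmulr_rle0 _ etax_pos).
    rewrite /M mulmxBl -!scalemxAl R0z (psd_quad0 pRX qz) !scaler0 subrr.
    done.
  by move: H; rewrite mulmxBr mulmx1 => /eqP; rewrite subr_eq0 => /eqP <-.
have claim (u w : 'cV[C]_(tdim d)) : M *m u = 0 -> u = R0 *m w -> tens Pperp *m u = u.
  move=> Mu uw.
  have qMu : quad M u = 0 by apply: quad_ker.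
  have Wm m : tens (fun l => if l == m then Al l else 1%:M) *m u = 0.
    set f := fun l => if l == m then b l else a l.
    set T := tens (fun l => if l == m then Al l else a l).
    have MT : M = T + (tens f - tens b).
      rewrite HM /T /Al tens_sub.
      have -> : tens (fun l => if l == m then a l else a l) = tens a.
        by apply: eq_tens => l; case: (l == m).
      by rewrite addrA addrNK.
    have pT : psd T by apply: psd_tens => l; case: (l == m).
    have pR : psd (tens f - tens b).
      apply: psd_tens_diff => // l; rewrite /f; case: (l == m) => //.
      by rewrite subrr; exact: psd0.
    have Tu : T *m u = 0.
      apply: (psd_quad0 pT); move: qMu; rewrite MT quadD => /eqP.
      by rewrite paddr_eq0 ?psd_quad_ge0 // => /andP [/eqP -> _].
    set Vm := tens (fun l => if l == m then 1%:M else rho0 l).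
    set Y := tens (fun l => if l == m then Al l *m rho0 l else 1%:M).
    have hVm : adjmx Vm = Vm.
      rewrite adjmx_tens; apply: eq_tens => l; case: (l == m); first exact: adjmx1.
      by case: (prho0 l).
    set c := \prod_l (if l == m then 1 else Cl l).
    have Tc : T = c *: tens (fun l => if l == m then Al l else rho0 l).
      by rewrite /c -tensZ; apply: eq_tens => l; case: (l == m); rewrite ?scale1r.
    have c0 : c != 0.
      by rewrite gt_eqF // prodr_gt0 // => l _; case: (l == m) => //; exact: ltr01.
    have TR : tens (fun l => if l == m then Al l else rho0 l) *m R0 = Vm *m Vm *m Y.
      by rewrite !tensM; apply: eq_tens => l; case: (l == m); rewrite ?mul1mx ?mulmx1.
    have VY : Vm *m (Y *m w) = 0.
      apply: herm_quad_sq => //; rewrite mulmxA -TR -mulmxA.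
      move: Tu; rewrite uw Tc -scalemxAl => /eqP; rewrite scaler_eq0 (negbTE c0) /=.
      by move/eqP.
    have -> : tens (fun l => if l == m then Al l else 1%:M) *m u = Vm *m (Y *m w).
      rewrite uw mulmxA [Vm *m (Y *m w)]mulmxA; congr (_ *m _).
      by rewrite !tensM; apply: eq_tens => l; case: (l == m); rewrite ?mul1mx ?mulmx1.
    exact: VY.
  have em m : tens (fun l => if l == m then Pperp l else 1%:M) *m u = u.
    set K := fun l => 1%:M - Pperp l.
    have KA l : K l *m pinvmx (Al l) *m Al l = K l.
      apply: mulmxKpV; rewrite submxE; apply/eqP/colwise => j; rewrite mul0mx -mulmxA.
      have hk : Al l *m (cokermx (Al l) *m delta_mx j (0 : 'I_1)) = 0.
        by rewrite mulmxA mulmx_coker mul0mx.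
      have [_ _ Pk] := HPperp l; have := (Pk (cokermx (Al l) *m delta_mx j 0)).2 hk.
      by rewrite /K mulmxBl mul1mx => ->; rewrite subrr.
    have H1 : tens (fun l => if l == m then K l else 1%:M) =
              1%:M - tens (fun l => if l == m then Pperp l else 1%:M).
      rewrite /K tens_sub (eq_tens (B := fun l => 1%:M)) ?tens1 // => l.
      by case: (l == m).
    have H2 : tens (fun l => if l == m then K l else 1%:M) =
        tens (fun l => if l == m then K l *m pinvmx (Al l) else 1%:M) *m
        tens (fun l => if l == m then Al l else 1%:M).
      by rewrite tensM; apply: eq_tens => l; case: (l == m); rewrite ?KA ?mulmx1.
    have : tens (fun l => if l == m then K l else 1%:M) *m u = 0.
      by rewrite H2 -mulmxA Wm mulmx0.
    by rewrite H1 mulmxBl mul1mx => /eqP; rewrite subr_eq0 => /eqP <-.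
  suff H : forall s : seq 'I_L, tens (fun l => if l \in s then Pperp l else 1%:M) *m u = u.
    rewrite (eq_tens (B := fun l => if l \in enum 'I_L then Pperp l else 1%:M)) ?H //.
    by move=> l; rewrite mem_enum.
  elim => [|m s IH].
    by rewrite (eq_tens (B := fun l => 1%:M)) // tens1 mul1mx.
  have -> : tens (fun l => if l \in m :: s then Pperp l else 1%:M) =
      tens (fun l => if l \in s then Pperp l else 1%:M) *m
      tens (fun l => if l == m then Pperp l else 1%:M).
    rewrite tensM; apply: eq_tens => l; rewrite in_cons; case: eqP => [->|_] /=.
      by have [_ PP _] := HPperp m; case: (m \in s); rewrite ?PP ?mul1mx.
    by rewrite mulmx1.
  by rewrite -mulmxA em IH.
have QPiE : tens Pperp *m (Pi *m E) = Pi *m E.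
  apply: colwise => j; rewrite -mulmxA.
  have : Pi *m (Pi *m E *m delta_mx j (0 : 'I_1)) = Pi *m E *m delta_mx j 0.
    by rewrite !mulmxA PiPi.
  move/PiS => [w Hw]; apply: (claim _ w) => //.
  by rewrite !mulmxA MPi ME !mul0mx.
have hQ : adjmx (tens Pperp) = tens Pperp.
  by rewrite adjmx_tens; apply: eq_tens => l; case: (HPperp l).
have hE : adjmx E = E by case: pE.
have QPEP : tens Pperp *m (Pi *m E *m Pi) = Pi *m E *m Pi by rewrite mulmxA QPiE.
have H2 : Pi *m E *m Pi *m tens Pperp = Pi *m E *m Pi.
  by have := congr1 (@adjmx _ _ _) QPEP; rewrite !adjmxM hQ hPi hE !mulmxA.
by rewrite -(mulmxA (tens Pperp) Pi E) QPiE H2.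
Qed.
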